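(* Let $f:\mathbb{R}^{m\times n}\to\mathbb{R}$ ($m\ge n$) be differentiable with $\|\nabla f(X)-\nabla f(Y)\|_*\le L\|X-Y\|_2$ for all $X,Y$, where $L>0$. Let $\eta>0$ with $\eta L\le1$, let $X_t, B_t\in\mathbb{R}^{m\times n}$ be arbitrary, let $\Delta_t=\arg\min_\Delta\{\operatorname{tr}(B_t^\top\Delta)+\frac{1}{2\eta}\|\Delta\|_2^2\}$ (i.e. $\Delta_t=-\eta\|B_t\|_*UV^\top$ with $B_t=U\Sigma V^\top$ the compact SVD, $\Delta_t=0$ if $B_t=0$), and $X_{t+1}=X_t+\Delta_t$. Then $$\Big(\frac{\eta}{2}-\frac{\eta^2L}{2}\Big)\|\nabla f(X_t)\|_*^2\le 2\big(f(X_t)-f(X_{t+1})\big)+(2\eta-\eta^2L)\|\nabla f(X_t)-B_t\|_*^2.$$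
   Context: $\|\cdot\|_2$ is the spectral norm (largest singular value) and $\|\cdot\|_*$ the nuclear norm (sum of singular values); $\operatorname{tr}(X^\top Y)$ is the Frobenius inner product. *)

(* Defs.v *)
From HB Require Import structures.
From mathcomp Require Import all_boot all_order all_algebra.
From mathcomp Require Import all_classical all_reals all_analysis.
Set Implicit Arguments. Unset Strict Implicit. Unset Printing Implicit Defensive.
Import Order.TTheory GRing.Theory Num.Theory.
Import numFieldNormedType.Exports.
Local Open Scope classical_set_scope.
Local Open Scope ring_scope.

Section Defs.
Context {R : realType} {m n : nat}.

(* Full singular value decomposition A = U S V^T with U, V orthogonal and
   S "rectangular diagonal" with nonnegative entries (the singular values
   are the diagonal entries S i i, i < min m n). *)
Definition is_svd (A : 'M[R]_(m, n)) (U : 'M[R]_m) (S : 'M[R]_(m, n))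
    (V : 'M[R]_n) : Prop :=
  [/\ U^T *m U = 1%:M, V^T *m V = 1%:M,
      (forall (i : 'I_m) (j : 'I_n), (i : nat) <> j -> S i j = 0),
      (forall (i : 'I_m) (j : 'I_n), 0 <= S i j) &
      A = U *m S *m V^T].

Definition sv_mx (A : 'M[R]_(m, n)) : 'M[R]_(m, n) :=
  (xget (0, 0, 0) [set p : 'M[R]_m * 'M[R]_(m, n) * 'M[R]_n |
                   is_svd A p.1.1 p.1.2 p.2]).1.2.

Definition spec_norm (A : 'M[R]_(m, n)) : R :=
  \big[Num.max/0]_(i < m) \big[Num.max/0]_(j < n) sv_mx A i j.

Definition nuc_norm (A : 'M[R]_(m, n)) : R :=
  \sum_(i < m) \sum_(j < n) sv_mx A i j.

(* gradient of f at X: the matrix of partial derivatives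
   (the Frobenius-representer of the differential when f is differentiable) *)
Definition grad (f : 'M[R]_(m, n) -> R) (X : 'M[R]_(m, n)) : 'M[R]_(m, n) :=
  \matrix_(i, j) derive f X (delta_mx i j).

End Defs.

(* Main.v *)
Require Import Defs.
From HB Require Import structures.
From mathcomp Require Import all_boot all_order all_algebra.
From mathcomp Require Import all_classical all_reals all_analysis.
From mathcomp Require Import complex ring lra zify.
Import Order.TTheory GRing.Theory Num.Theory.
Import numFieldNormedType.Exports.
Local Open Scope ring_scope.

Set Implicit Arguments. Unset Strict Implicit.

Section LA.

Variable R : realType.

Local Open Scope complex_scope.
Notation CRe := (@complex.Re R).
Notation CIm := (@complex.Im R).
Lemma ReM (x y : R[i]) : CRe (x * y) = CRe x * CRe y - CIm x * CIm y.
Proof. by case: x => a b; case: y => c d. Qed.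
Lemma ImM (x y : R[i]) : CIm (x * y) = CRe x * CIm y + CIm x * CRe y.
Proof. by case: x => a b; case: y => c d. Qed.
Lemma Re_sum I (r : seq I) P (F : I -> R[i]) : CRe (\sum_(i <- r | P i) F i) = \sum_(i <- r | P i) CRe (F i).
Proof. by apply: (big_morph CRe) => // -[a b] [c d]. Qed.
Lemma Im_sum I (r : seq I) P (F : I -> R[i]) : CIm (\sum_(i <- r | P i) F i) = \sum_(i <- r | P i) CIm (F i).
Proof. by apply: (big_morph CIm) => // -[a b] [c d]. Qed.

Lemma sum_sq_eq0 n (a : 'I_n -> R) : \sum_i a i ^+ 2 = 0 -> forall i, a i = 0.
Proof.
move=> /eqP; rewrite psumr_eq0 => [/allP H i|i _]; last exact: sqr_ge0.
by apply/eqP; rewrite -sqrf_eq0; apply/eqP/eqP/H; rewrite mem_index_enum.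
Qed.

Lemma sym_eigvec k (M : 'M[R]_k.+1) : M^T = M ->
  exists (x : 'rV[R]_k.+1) (mu : R), x != 0 /\ x *m M = mu *: x.
Proof.
move=> Msym.
pose MC := map_mx (real_complex R) M.
have [z rz] : exists z, root (char_poly MC) z.
  by apply/closed_rootP; rewrite size_char_poly.
have /eigenvalueP [w wE wn0] : eigenvalue MC z by rewrite eigenvalue_root_char.
pose a := \row_j CRe (w 0 j); pose b := \row_j CIm (w 0 j).
have Ew j : \sum_i w 0 i * (M i j)%:C = z * w 0 j.
  by have /rowP/(_ j) := wE; rewrite !mxE => <-; apply: eq_bigr => i _; rewrite mxE.
have Ea j : \sum_i a 0 i * M i j = CRe z * a 0 j - CIm z * b 0 j.
  have := congr1 CRe (Ew j); rewrite Re_sum ReM !mxE => <-.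
  by apply: eq_bigr => i _; rewrite ReM !mxE /= mulr0 subr0.
have Eb j : \sum_i b 0 i * M i j = CRe z * b 0 j + CIm z * a 0 j.
  have := congr1 CIm (Ew j); rewrite Im_sum ImM !mxE => <-.
  by apply: eq_bigr => i _; rewrite ImM !mxE /= mulr0 add0r mulrC.
set x := CRe z; set y := CIm z.
have S12 : \sum_j (\sum_i a 0 i * M i j) * b 0 j = \sum_j (\sum_i b 0 i * M i j) * a 0 j.
  under eq_bigr do rewrite mulr_suml.
  under [RHS]eq_bigr do rewrite mulr_suml.
  rewrite [RHS]exchange_big; apply: eq_bigr => j _; apply: eq_bigr => i _.
  have -> : M j i = M i j by have := congr1 (fun A : 'M[R]_(k.+1) => A i j) Msym; rewrite mxE.
  ring.
have Hy : y * (\sum_j a 0 j ^+ 2 + \sum_j b 0 j ^+ 2) = 0.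
  have E1 : \sum_j (\sum_i a 0 i * M i j) * b 0 j =
     x * (\sum_j a 0 j * b 0 j) - y * (\sum_j b 0 j ^+ 2).
    rewrite !mulr_sumr -sumrB; apply: eq_bigr => j _; rewrite Ea; ring.
  have E2 : \sum_j (\sum_i b 0 i * M i j) * a 0 j =
     x * (\sum_j a 0 j * b 0 j) + y * (\sum_j a 0 j ^+ 2).
    rewrite !mulr_sumr -big_split; apply: eq_bigr => j _; rewrite Eb /=; ring.
  move: S12; rewrite E1 E2 => H.
  have -> : y * (\sum_j a 0 j ^+ 2 + \sum_j b 0 j ^+ 2) =
    (x * (\sum_j a 0 j * b 0 j) + y * (\sum_j a 0 j ^+ 2)) -
    (x * (\sum_j a 0 j * b 0 j) - y * (\sum_j b 0 j ^+ 2)) by ring.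
  by rewrite H subrr.
have Hpos : \sum_j a 0 j ^+ 2 + \sum_j b 0 j ^+ 2 != 0.
  apply/negP => /eqP H; move/negP: wn0; apply; apply/eqP/rowP => j.
  have Ha0 : 0 <= \sum_j a 0 j ^+ 2 by apply: sumr_ge0 => i _; exact: sqr_ge0.
  have Hb0 : 0 <= \sum_j b 0 j ^+ 2 by apply: sumr_ge0 => i _; exact: sqr_ge0.
  have Ha : \sum_j a 0 j ^+ 2 = 0 by lra.
  have Hb : \sum_j b 0 j ^+ 2 = 0 by lra.
  have := @sum_sq_eq0 _ _ Ha j; have := @sum_sq_eq0 _ _ Hb j; rewrite !mxE.
  by case: (w 0 j) => /= p q -> ->.
have y0 : CIm z = 0 by move: Hy => /eqP; rewrite mulf_eq0 (negbTE Hpos) orbF => /eqP.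
have [a0|an0] := eqVneq a 0.
  exists b, x; split.
    apply/negP => /eqP b0; move/negP: wn0; apply; apply/eqP/rowP => j.
    have /rowP/(_ j) := a0; have /rowP/(_ j) := b0; rewrite !mxE.
    by case: (w 0 j) => /= p q -> ->.
  by apply/rowP => j; rewrite [RHS]mxE /x; have := Eb j; rewrite y0 mul0r addr0 => <-; rewrite mxE.
exists a, x; split => //.
by apply/rowP => j; rewrite [RHS]mxE /x; have := Ea j; rewrite y0 mul0r subr0 => <-; rewrite mxE.
Qed.

Local Close Scope complex_scope.
Definition sq k (x : 'cV[R]_k) : R := (x^T *m x) 0 0.

Lemma sqE k (x : 'cV[R]_k) : sq x = \sum_i x i 0 ^+ 2.
Proof. by rewrite /sq mxE; apply: eq_bigr => i _; rewrite mxE expr2. Qed.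

Lemma sq_ge0 k (x : 'cV[R]_k) : 0 <= sq x.
Proof. by rewrite sqE; apply: sumr_ge0 => i _; exact: sqr_ge0. Qed.

Lemma sq_eq0 k (x : 'cV[R]_k) : sq x = 0 -> x = 0.
Proof.
rewrite sqE => /eqP; rewrite psumr_eq0 => [/allP H|i _]; last exact: sqr_ge0.
apply/matrixP => i j; rewrite ord1 mxE; apply/eqP; rewrite -sqrf_eq0.
by apply: H; rewrite mem_index_enum.
Qed.

Lemma sqZ k a (x : 'cV[R]_k) : sq (a *: x) = a ^+ 2 * sq x.
Proof. by rewrite !sqE mulr_sumr; apply: eq_bigr => i _; rewrite mxE exprMn. Qed.

Lemma mul_outer k p (x : 'M[R]_(k,1)) (y z : 'cV[R]_p) :
  x *m y^T *m z = (y^T *m z) 0 0 *: x.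
Proof. by rewrite -mulmxA {1}[y^T *m z]mx11_scalar mul_mx_scalar. Qed.

Lemma normalize k (x : 'cV[R]_k) : x != 0 ->
  exists2 c, 0 < c & sq (c^-1 *: x) = 1.
Proof.
move=> xn0; have sp : 0 < sq x.
  by rewrite lt_def sq_ge0 andbT; apply/negP => /eqP /sq_eq0 x0; rewrite x0 eqxx in xn0.
exists (Num.sqrt (sq x)); first by rewrite sqrtr_gt0.
rewrite sqZ exprVn sqr_sqrtr ?mulVf //; [exact: lt0r_neq0 | exact: ltW].
Qed.

Lemma dotE0 k (u : 'cV[R]_k.+1) : (u^T *m (delta_mx 0 0 : 'cV[R]_k.+1)) 0 0 = u 0 0.
Proof. by rewrite -colE !mxE. Qed.

Lemma dot0E k (u : 'cV[R]_k.+1) : ((delta_mx 0 0 : 'cV[R]_k.+1)^T *m u) 0 0 = u 0 0.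
Proof. by rewrite trmx_delta -rowE !mxE. Qed.

Lemma householder k (u : 'cV[R]_k.+1) : sq u = 1 ->
  exists H : 'M[R]_k.+1, H^T *m H = 1%:M /\ H *m delta_mx 0 0 = u.
Proof.
move=> u1; set e := delta_mx 0 0 : 'cV[R]_k.+1.
have [ue|une] := eqVneq u e.
  by exists 1%:M; rewrite trmx1 mulmx1 mul1mx ue.
set w := u - e.
have wn0 : w != 0 by rewrite subr_eq0.
set c := sq w.
have cE : c = 2 - 2 * u 0 0.
  rewrite /c /sq /w (_ : (u - e)^T = u^T - e^T); last by apply/matrixP => i j; rewrite !mxE.
  have subE (A B : 'M[R]_1) : (A - B) 0 0 = A 0 0 - B 0 0 by rewrite !mxE.
  rewrite mulmxBl !mulmxBr !subE.
  have := u1; rewrite /sq => ->; rewrite dotE0 dot0E.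
  have -> : (e^T *m e) 0 0 = 1 by rewrite dot0E /e mxE.
  ring.
have we : (w^T *m e) 0 0 = u 0 0 - 1.
  by rewrite dotE0 /w !mxE.
have cn0 : c != 0.
  by apply/negP => /eqP /sq_eq0 x0; rewrite x0 eqxx in wn0.
set s := 2 / c.
set P := w *m w^T.
exists (1%:M - s *: P); split.
  have HT : (1%:M - s *: P)^T = 1%:M - s *: P.
    by rewrite linearB /= linearZ /= trmx1 /P trmx_mul trmxK.
  have PP : P *m P = c *: P by rewrite /P mulmxA mul_outer -scalemxAl.
  rewrite HT mulmxBl mul1mx mulmxBr mulmx1 -scalemxAl -scalemxAr PP !scalerA.
  have -> : s * s * c = s + s by rewrite /s; field.
  rewrite scalerDl; set Q := s *: P.
  by rewrite opprB addrK subrK.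
rewrite mulmxBl mul1mx -scalemxAl /P mul_outer we scalerA.
have -> : s * (u 0 0 - 1) = -1.
  rewrite /s; move: cn0; rewrite cE => cn0; field.
  exact: cn0.
by rewrite scaleNr scale1r opprK /w addrC subrK.
Qed.

Lemma normalize' k (x : 'cV[R]_k) : x != 0 ->
  0 < sq x /\ sq ((Num.sqrt (sq x))^-1 *: x) = 1.
Proof.
move=> xn0; have sp : 0 < sq x.
  by rewrite lt_def sq_ge0 andbT; apply/negP => /eqP /sq_eq0 x0; rewrite x0 eqxx in xn0.
split => //; rewrite sqZ exprVn sqr_sqrtr ?mulVf //; [exact: lt0r_neq0 | exact: ltW].
Qed.

Lemma sq1_neq0 k (x : 'cV[R]_k) : sq x = 1 -> x != 0.
Proof. by move=> h; apply/negP => /eqP x0; move: h; rewrite x0 /sq mulmx0 mxE => /eqP; rewrite eq_sym oner_eq0. Qed.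

Lemma left_ker m n (A : 'M[R]_(m,n)) (v : 'cV[R]_n) : (n <= m)%N -> v != 0 ->
  A *m v = 0 -> exists u : 'cV[R]_m, sq u = 1 /\ A^T *m u = 0.
Proof.
move=> nm vn0 Av.
have sub : (v^T <= kermx A^T)%MS by apply/sub_kermxP; rewrite -trmx_mul Av trmx0.
have r1 : (0 < \rank v^T)%N.
  rewrite lt0n mxrank_eq0; apply/negP => /eqP vt0; move/negP: vn0; apply.
  by apply/eqP; rewrite -[v]trmxK vt0 trmx0.
have := mxrankS sub; rewrite mxrank_ker mxrank_tr => r2.
have rk : (0 < \rank (kermx A))%N.
  rewrite !mxrank_tr in r1 r2; rewrite mxrank_ker; lia.
set x := nz_row (kermx A).
have xn0 : x != 0 by rewrite /x nz_row_eq0 -mxrank_eq0 -lt0n.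
have xA : x *m A = 0 by apply/sub_kermxP; exact: nz_row_sub.
have xtn0 : x^T != 0 by apply/negP => /eqP h; move/negP: xn0; apply; rewrite -[x]trmxK h trmx0.
have [_ h] := normalize' xtn0.
exists ((Num.sqrt (sq x^T))^-1 *: x^T); split => //.
by rewrite -scalemxAr -trmx_mul xA trmx0 scaler0.
Qed.


Lemma top_pair m n (A : 'M[R]_(m.+1, n.+1)) : (n <= m)%N ->
  exists (u : 'cV[R]_m.+1) (v : 'cV[R]_n.+1) (s : R),
   [/\ sq u = 1, sq v = 1, 0 <= s, A *m v = s *: u & A^T *m u = s *: v].
Proof.
move=> nm; set M := A^T *m A.
have Msym : M^T = M by rewrite /M trmx_mul trmxK.
have [x [mu [xn0 xM]]] := sym_eigvec Msym.
have Mv0 : M *m x^T = mu *: x^T.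
  rewrite -{1}Msym -trmx_mul xM; apply/matrixP=> i j; rewrite !mxE //.
have xtn0 : x^T != 0.
  by apply/negP => /eqP h; move/negP: xn0; apply; rewrite -[x]trmxK h trmx0.
have [_ sv] := normalize' xtn0.
set v := _ *: x^T in sv.
have Mv : M *m v = mu *: v by rewrite /v -scalemxAr Mv0 !scalerA mulrC.
set w := A *m v.
have sw : sq w = mu.
  rewrite /sq /w trmx_mul -mulmxA (mulmxA A^T) -/M Mv -scalemxAr mxE.
  by move: sv; rewrite /sq => ->; rewrite mulr1.
case: (eqVneq w 0) => [w0|wn0].
  have [u [su Atu]] := left_ker (nm : (n.+1 <= m.+1)%N) (sq1_neq0 sv) w0.
  by exists u, v, 0; split => //; rewrite ?scale0r // -/w w0.
have [sp su] := normalize' wn0.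
set sg := Num.sqrt (sq w) in su *.
have sgn0 : sg != 0 by rewrite sqrtr_eq0 -ltNge.
exists (sg^-1 *: w), v, sg; split => //; first exact: sqrtr_ge0.
  by rewrite scalerA divff // scale1r.
rewrite -scalemxAr /w mulmxA -/M Mv scalerA; congr (_ *: _).
rewrite -sw -[sq w]sqr_sqrtr ?(ltW sp) // -/sg; field; exact: sgn0.
Qed.

Lemma orth_blk m (U : 'M[R]_m) : U^T *m U = 1%:M ->
  (block_mx (1%:M : 'M[R]_1) 0 0 U)^T *m block_mx (1%:M : 'M[R]_1) 0 0 U = 1%:M.
Proof.
move=> UU; rewrite tr_block_mx !trmx0 trmx1 mulmx_block UU.
by rewrite !mulmx0 !mul0mx !mulmx1 !addr0 !add0r -scalar_mx_block.
Qed.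

Lemma blk_diag m n (s : R) (S' : 'M[R]_(m,n)) : 0 <= s ->
  (forall (i : 'I_m) (j : 'I_n), (i:nat) <> j -> S' i j = 0) -> (forall i j, 0 <= S' i j) ->
  (forall (i : 'I_(1+m)) (j : 'I_(1+n)), (i:nat) <> j -> block_mx (s%:M : 'M[R]_1) 0 0 S' i j = 0) /\
  (forall (i : 'I_(1+m)) (j : 'I_(1+n)), 0 <= block_mx (s%:M : 'M[R]_1) 0 0 S' i j).
Proof.
move=> s0 Sd Sp; split.
- move=> i j h.
  case: (split_ordP i) h => i' -> h; case: (split_ordP j) h => j' -> h;
    rewrite ?block_mxEul ?block_mxEur ?block_mxEdl ?block_mxEdr ?mxE //.
  + by exfalso; apply: h; rewrite !ord1.
  + by apply: Sd => h'; apply: h; rewrite /= h'.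
- move=> i j.
  case: (split_ordP i) => i' ->; case: (split_ordP j) => j' ->;
    rewrite ?block_mxEul ?block_mxEur ?block_mxEdl ?block_mxEdr ?mxE //.
  by rewrite !ord1 eqxx mulr1n.
Qed.

Lemma blk_prod m n (s:R) (U' : 'M[R]_m) (S' : 'M[R]_(m,n)) (V' : 'M[R]_n) :
  block_mx (1%:M : 'M[R]_1) 0 0 U' *m (block_mx (s%:M : 'M[R]_1) 0 0 S' *m (block_mx (1%:M : 'M[R]_1) 0 0 V')^T)
  = block_mx (s%:M : 'M[R]_1) 0 0 (U' *m S' *m V'^T).
Proof.
rewrite tr_block_mx !trmx0 trmx1 !mulmx_block.
by rewrite !mulmx0 !mul0mx !mulmx1 !mul1mx !addr0 !add0r mulmx0 mulmxA.
Qed.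

Lemma svd_ex n : forall m (A : 'M[R]_(m,n)), (n <= m)%N -> exists U S V, is_svd A U S V.
Proof.
elim: n => [|n IH] m A nm.
  exists 1%:M, 0, 1%:M; split.
  - by rewrite trmx1 mulmx1.
  - by rewrite trmx1 mulmx1.
  - by move=> i j _; rewrite mxE.
  - by move=> i j; rewrite mxE.
  - by rewrite [A]thinmx0 [RHS]thinmx0.
case: m A nm => [|m] A nm //.
have [u [v [sg [su sv sg0 Av Atu]]]] := top_pair A nm.
have [Hu [HuH Hue]] := householder su.
have [Hv [HvH Hve]] := householder sv.
have HuH' := mulmx1C HuH; have HvH' := mulmx1C HvH.
set B := Hu^T *m A *m Hv.
have Bcol : B *m (delta_mx 0 0 : 'cV_n.+1) = sg *: (delta_mx 0 0 : 'cV_m.+1).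
  by rewrite /B -!mulmxA Hve Av -scalemxAr -Hue mulmxA HuH mul1mx.
have Brow : (delta_mx 0 0 : 'cV_m.+1)^T *m B = sg *: (delta_mx 0 0 : 'cV_n.+1)^T.
  rewrite /B !mulmxA -trmx_mul Hue -[u^T *m A]trmxK trmx_mul trmxK Atu.
  rewrite linearZ /= -scalemxAl -Hve trmx_mul -mulmxA HvH mulmx1 //.
have Bc i (j : 'I_n.+1) : (j : nat) = 0%N -> B i j = if (i : nat) == 0%N then sg else 0.
  move=> j0; have -> : j = 0 by apply/val_inj.
  have /matrixP/(_ i 0) := Bcol; rewrite -colE !mxE => ->.
  by rewrite eqxx andbT -(inj_eq val_inj) /=; case: (i : nat) => [|k] /=; rewrite ?mulr1 ?mulr0.
have Br (i : 'I_m.+1) j : (i : nat) = 0%N -> B i j = if (j : nat) == 0%N then sg else 0.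
  move=> i0; have -> : i = 0 by apply/val_inj.
  have /matrixP/(_ 0 j) := Brow; rewrite trmx_delta -rowE !mxE => ->.
  by rewrite eqxx andbT -(inj_eq val_inj) /=; case: (j : nat) => [|k] /=; rewrite ?mulr1 ?mulr0.
have BE0 : B = Hu^T *m A *m Hv by [].
clearbody B.
pose B' : 'M[R]_(1 + m, 1 + n) := B.
set A' := drsubmx B'.
have BE : B' = block_mx (sg%:M : 'M[R]_1) 0 0 A'.
  rewrite -[B' in LHS]submxK; congr block_mx.
  - apply/matrixP => i j; rewrite !mxE !ord1 /B' Bc //= mulr1n //.
  - apply/matrixP => i j; rewrite !mxE /B' Br /= ?ord1 //.
  - apply/matrixP => i j; rewrite !mxE /B' Bc /= ?ord1 //.
have [U' [S' [V' [UU VV Sd Sp AE]]]] := IH m A' nm.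
exists (Hu *m block_mx (1%:M : 'M[R]_1) 0 0 U'), (block_mx (sg%:M : 'M[R]_1) 0 0 S'),
  (Hv *m block_mx (1%:M : 'M[R]_1) 0 0 V'); split.
- by rewrite trmx_mul -mulmxA (mulmxA Hu^T) HuH mul1mx orth_blk.
- by rewrite trmx_mul -mulmxA (mulmxA Hv^T) HvH mul1mx orth_blk.
- exact: (blk_diag sg0 Sd Sp).1.
- exact: (blk_diag sg0 Sd Sp).2.
- have -> : A = Hu *m B *m Hv^T by rewrite BE0 !mulmxA HuH' mul1mx -mulmxA HvH' mulmx1.
  rewrite trmx_mul !mulmxA; congr (_ *m _); rewrite -!mulmxA; congr (_ *m _).
  by rewrite blk_prod -AE; exact: BE.
Qed.

End LA.
Section Norms.
Variable R : realType.

Definition bil k l (u : 'cV[R]_k) (A : 'M[R]_(k,l)) (v : 'cV[R]_l) : R := (u^T *m A *m v) 0 0.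

Lemma bilE k l (u : 'cV[R]_k) (A : 'M[R]_(k,l)) (v : 'cV[R]_l) :
  bil u A v = \sum_i \sum_j u i 0 * A i j * v j 0.
Proof.
rewrite /bil mxE exchange_big /=; apply: eq_bigr => i _.
rewrite mxE mulr_suml; apply: eq_bigr => j _; rewrite !mxE //.
Qed.

Lemma sum_single l (g : 'I_l -> R) (c : nat) (K : R) : 0 <= K ->
  (forall j : 'I_l, (j : nat) <> c -> g j = 0) -> (forall j, g j <= K) -> \sum_j g j <= K.
Proof.
move=> K0 gz gK; case: (ltnP c l) => [cl|lc].
  rewrite (bigD1 (Ordinal cl)) //= big1 ?addr0 // => j /eqP jn.
  by apply: gz => jc; apply: jn; apply/val_inj.
rewrite big1 // => j _; apply: gz => jc; have := ltn_ord j; rewrite jc; lia.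
Qed.

Lemma diag_bound k l (S : 'M[R]_(k,l)) (K : R) (p : 'cV[R]_k) (q : 'cV[R]_l) :
  0 <= K -> (forall (i : 'I_k) (j : 'I_l), (i:nat) <> j -> S i j = 0) ->
  (forall i j, 0 <= S i j) -> (forall i j, S i j <= K) ->
  sq p = 1 -> sq q = 1 -> bil p S q <= K.
Proof.
move=> K0 Sd Sp SK sp sq1; rewrite bilE.
apply: (@le_trans _ _ (\sum_i \sum_j (S i j * p i 0 ^+ 2 + S i j * q j 0 ^+ 2) / 2)).
  apply: ler_sum => i _; apply: ler_sum => j _.
  have := Sp i j; move: (S i j) (p i 0) (q j 0) => s a b s0.
  have := mulr_ge0 s0 (sqr_ge0 (a - b)); nra.
have E : \sum_i \sum_j (S i j * p i 0 ^+ 2 + S i j * q j 0 ^+ 2) / 2 =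
   (\sum_i p i 0 ^+ 2 * \sum_j S i j + \sum_j q j 0 ^+ 2 * \sum_i S i j) / 2.
  under eq_bigr do rewrite -mulr_suml; rewrite -mulr_suml; congr (_ / 2).
  under eq_bigr do rewrite big_split; rewrite big_split /=; congr (_ + _).
    by apply: eq_bigr => i _; rewrite mulr_sumr; apply: eq_bigr => j _; rewrite mulrC.
  by rewrite exchange_big; apply: eq_bigr => j _; rewrite mulr_sumr; apply: eq_bigr => i _; rewrite mulrC.
rewrite E.
have H1 : \sum_i p i 0 ^+ 2 * \sum_j S i j <= K.
  have HK : \sum_i p i 0 ^+ 2 * K = K by rewrite -mulr_suml -sqE sp mul1r.
  rewrite -[X in _ <= X]HK; apply: ler_sum => i _; apply: ler_wpM2l; first exact: sqr_ge0.
  by apply: (@sum_single _ _ i) => // j jn; apply: Sd => h; apply: jn; rewrite h.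
have H2 : \sum_j q j 0 ^+ 2 * \sum_i S i j <= K.
  have HK : \sum_j q j 0 ^+ 2 * K = K by rewrite -mulr_suml -sqE sq1 mul1r.
  rewrite -[X in _ <= X]HK; apply: ler_sum => j _; apply: ler_wpM2l; first exact: sqr_ge0.
  by apply: (@sum_single _ _ j) => // i jn; exact: Sd.
lra.
Qed.

Lemma svd_sv m n (A : 'M[R]_(m,n)) : (n <= m)%N -> exists U V, is_svd A U (sv_mx A) V.
Proof.
move=> nm; have [U [S [V h]]] := svd_ex A nm.
rewrite /sv_mx; set P := [set p : 'M[R]_m * 'M[R]_(m, n) * 'M[R]_n | is_svd A p.1.1 p.1.2 p.2]%classic.
have : P (xget (0, 0, 0) P) by apply: xgetPex; exists (U, S, V).
by move=> Px; exists (xget (0, 0, 0) P).1.1, (xget (0, 0, 0) P).2.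
Qed.

Lemma bil_svd k l (u : 'cV[R]_k) (U : 'M[R]_k) (S : 'M[R]_(k,l)) (V : 'M[R]_l) v :
  bil u (U *m S *m V^T) v = bil (U^T *m u) S (V^T *m v).
Proof. by rewrite /bil trmx_mul trmxK !mulmxA. Qed.

Lemma sq_orth k (U : 'M[R]_k) (u : 'cV[R]_k) : U *m U^T = 1%:M -> sq (U^T *m u) = sq u.
Proof. by move=> UU; rewrite /sq trmx_mul trmxK mulmxA -(mulmxA u^T) UU mulmx1. Qed.

Lemma entry3 a b c d (X : 'M[R]_(a,b)) (Y : 'M[R]_(b,c)) (Z : 'M[R]_(c,d)) i j :
  (X *m Y *m Z) i j = bil (row i X)^T Y (col j Z).
Proof.
rewrite /bil trmxK !mxE; apply: eq_bigr => k _; rewrite !mxE; congr (_ * _).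
by apply: eq_bigr => l _; rewrite !mxE.
Qed.

Lemma entry2 a b c (X : 'M[R]_(a,b)) (Z : 'M[R]_(b,c)) i j :
  (X *m Z) i j = (row i X *m col j Z) 0 0.
Proof. by rewrite !mxE; apply: eq_bigr => k _; rewrite !mxE. Qed.

Lemma sq_col k (U : 'M[R]_k) i : U^T *m U = 1%:M -> sq (col i U) = 1.
Proof. by move=> UU; rewrite /sq tr_col -entry2 UU mxE eqxx. Qed.


Lemma spec_ge0 m n (A : 'M[R]_(m,n)) : 0 <= spec_norm A.
Proof. exact: bigmax_ge_id. Qed.

Lemma sv_le_spec m n (A : 'M[R]_(m,n)) i j : sv_mx A i j <= spec_norm A.
Proof.
rewrite /spec_norm; apply: le_trans (le_bigmax _ _ i).
exact: (le_bigmax _ (fun j => sv_mx A i j) j).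
Qed.

Lemma nuc_ge0 m n (A : 'M[R]_(m,n)) : (n <= m)%N -> 0 <= nuc_norm A.
Proof.
move=> nm; have [U [V [UU VV Sd Sp AE]]] := svd_sv A nm.
by apply: sumr_ge0 => i _; apply: sumr_ge0 => j _; exact: Sp.
Qed.

Lemma spec_ge m n (A : 'M[R]_(m,n)) u v : (n <= m)%N -> sq u = 1 -> sq v = 1 ->
  bil u A v <= spec_norm A.
Proof.
move=> nm su sv; have [U [V [UU VV Sd Sp AE]]] := svd_sv A nm.
rewrite {1}AE bil_svd; apply: diag_bound => //.
- exact: spec_ge0.
- exact: sv_le_spec.
- by rewrite sq_orth // mulmx1C.
- by rewrite sq_orth // mulmx1C.
Qed.

Lemma spec_le m n (A : 'M[R]_(m,n)) K : (n <= m)%N -> 0 <= K ->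
  (forall u v, sq u = 1 -> sq v = 1 -> bil u A v <= K) -> spec_norm A <= K.
Proof.
move=> nm K0 H; have [U [V [UU VV Sd Sp AE]]] := svd_sv A nm.
have SE : sv_mx A = U^T *m A *m V.
  by rewrite {2}AE !mulmxA UU mul1mx -mulmxA VV mulmx1.
rewrite /spec_norm; apply: bigmax_le => // i _; apply: bigmax_le => // j _.
rewrite SE entry3 tr_row trmxK; apply: H; exact: sq_col.
Qed.

Lemma tr_sum m n (S W : 'M[R]_(m,n)) :
  \tr (S^T *m W) = \sum_i \sum_j S i j * W i j.
Proof.
rewrite /mxtrace exchange_big; apply: eq_bigr => j _; rewrite mxE.
by apply: eq_bigr => i _; rewrite mxE.
Qed.

Lemma tr_svd m n (U : 'M[R]_m) (S : 'M[R]_(m,n)) (V : 'M[R]_n) (C : 'M[R]_(m,n)) :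
  V^T *m V = 1%:M -> \tr ((U *m S *m V^T)^T *m C) = \tr (S^T *m (U^T *m C *m V)).
Proof.
move=> VV; rewrite !trmx_mul trmxK -!mulmxA mxtrace_mulC -!mulmxA //.
Qed.

Lemma dual m n (A C : 'M[R]_(m,n)) : (n <= m)%N ->
  \tr (A^T *m C) <= nuc_norm A * spec_norm C.
Proof.
move=> nm; have [U [V [UU VV Sd Sp AE]]] := svd_sv A nm.
rewrite {1}AE tr_svd // tr_sum /nuc_norm mulr_suml; apply: ler_sum => i _.
rewrite mulr_suml; apply: ler_sum => j _; apply: ler_wpM2l; first exact: Sp.
rewrite entry3 tr_row trmxK; apply: spec_ge => //; exact: sq_col.
Qed.

Lemma bilZ k l (u : 'cV[R]_k) c (A : 'M[R]_(k,l)) v : bil u (c *: A) v = c * bil u A v.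
Proof. by rewrite /bil -scalemxAr -scalemxAl mxE. Qed.

Lemma bilN k l (u : 'cV[R]_k) (A : 'M[R]_(k,l)) v : bil u (- A) v = bil (- u) A v.
Proof.
rewrite /bil mulmxN mulNmx (_ : (-u)^T = - u^T); last by apply/matrixP => i j; rewrite !mxE.
by rewrite !mulNmx.
Qed.

Lemma sqN k (u : 'cV[R]_k) : sq (- u) = sq u.
Proof. by rewrite !sqE; apply: eq_bigr => i _; rewrite mxE sqrrN. Qed.

Lemma spec_scale m n (A : 'M[R]_(m,n)) c : (n <= m)%N -> 0 <= c ->
  spec_norm (c *: A) <= c * spec_norm A.
Proof.
move=> nm c0; apply: spec_le => //; first by apply: mulr_ge0 => //; exact: spec_ge0.
by move=> u v su sv; rewrite bilZ; apply: ler_wpM2l => //; exact: spec_ge.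
Qed.

Lemma spec_opp m n (A : 'M[R]_(m,n)) : (n <= m)%N -> spec_norm (- A) <= spec_norm A.
Proof.
move=> nm; apply: spec_le => //; first exact: spec_ge0.
by move=> u v su sv; rewrite bilN; apply: spec_ge => //; rewrite sqN.
Qed.

Lemma nuc_attain m n (A : 'M[R]_(m,n)) : (n <= m)%N ->
  exists W, \tr (A^T *m W) = nuc_norm A /\ spec_norm W <= 1.
Proof.
move=> nm; have [U [V [UU VV Sd Sp AE]]] := svd_sv A nm.
pose Q : 'M[R]_(m,n) := \matrix_(i,j) ((i : nat) == j)%:R.
exists (U *m Q *m V^T); split.
  rewrite {1}AE tr_svd //.
  have -> : U^T *m (U *m Q *m V^T) *m V = Q by rewrite !mulmxA UU mul1mx -mulmxA VV mulmx1.
  rewrite tr_sum.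
  rewrite /nuc_norm; apply: eq_bigr => i _; apply: eq_bigr => j _; rewrite mxE.
  by case: eqP => [_|/Sd ->]; rewrite ?mulr1 ?mul0r.
apply: spec_le => // u v su sv; rewrite bil_svd; apply: diag_bound => //.
- by move=> i j h; rewrite mxE; case: eqP.
- by move=> i j; rewrite mxE; case: eqP.
- by move=> i j; rewrite mxE; case: eqP.
- by rewrite sq_orth // mulmx1C.
- by rewrite sq_orth // mulmx1C.
Qed.

Lemma nuc_tri m n (G B : 'M[R]_(m,n)) : (n <= m)%N ->
  nuc_norm G <= nuc_norm B + nuc_norm (G - B).
Proof.
move=> nm; have [W [WE W1]] := nuc_attain G nm.
have E : \tr (G^T *m W) = \tr (B^T *m W) + \tr ((G - B)^T *m W).
  by rewrite -mxtraceD -mulmxDl -raddfD /= addrC subrK.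
rewrite -WE E; apply: lerD.
  apply: le_trans (dual _ _ nm) _; rewrite -[X in _ <= X]mulr1.
  by apply: ler_wpM2l => //; exact: nuc_ge0.
apply: le_trans (dual _ _ nm) _; rewrite -[X in _ <= X]mulr1.
by apply: ler_wpM2l => //; exact: nuc_ge0.
Qed.

End Norms.
Section Anal.
Variable R : realType.
Variables m n : nat.

Lemma dir_grad (f : 'M[R]_(m,n) -> R) (X D : 'M[R]_(m,n)) : differentiable f X ->
  derive f X D = \tr ((grad f X)^T *m D).
Proof.
move=> df; rewrite tr_sum deriveE // {1}(matrix_sum_delta D) linear_sum.
apply: eq_bigr => i _; rewrite linear_sum; apply: eq_bigr => j _.
by rewrite linearZ /= mxE deriveE // mulrC.
Qed.

Lemma phi_derive (f : 'M[R]_(m,n) -> R) (X D : 'M[R]_(m,n)) (s : R) : (forall Y, differentiable f Y) ->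
  is_derive s 1 (fun t => f (X + t *: D)) (derive f (X + s *: D) D).
Proof.
move=> df.
have E : (fun h : R => h^-1 *: (((fun t => f (X + t *: D)) \o shift s) (h *: 1) - (fun t => f (X + t *: D)) s))
  = (fun h => h^-1 *: ((f \o shift (X + s *: D)) (h *: D) - f (X + s *: D))).
  apply: funext => h /=; congr (_ *: (f _ - _)).
  by rewrite -[h%:A]/(h * 1) mulr1 scalerDl addrCA.
apply: DeriveDef; first by rewrite /derivable E; exact: diff_derivable.
by rewrite /derive E.
Qed.

End Anal.

Section Descent.
Local Open Scope classical_set_scope.
Local Open Scope ring_scope.
Variable R : realType.
Variables m n : nat.

Lemma descent (f : 'M[R]_(m,n) -> R) (L : R) (X D : 'M[R]_(m,n)) : (n <= m)%N ->
  (forall Y, differentiable f Y) -> 0 <= L ->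
  (forall X Y, nuc_norm (grad f X - grad f Y) <= L * spec_norm (X - Y)) ->
  f (X + D) <= f X + \tr ((grad f X)^T *m D) + L / 2 * spec_norm D ^+ 2.
Proof.
move=> nm df L0 Lip.
set g0 := \tr ((grad f X)^T *m D).
set c := L * spec_norm D ^+ 2.
pose phi := fun t : R => f (X + t *: D).
pose q : {poly R} := g0 *: 'X + (c / 2) *: 'X^2.
pose psi := phi - horner q.
have qd : forall x : R, q^`().[x] = g0 + c * x.
  move=> x; rewrite /q derivD !derivZ derivX derivXn /= !hornerE /=.
  have two : (2:R) != 0 by rewrite pnatr_eq0.
  by field.
have Hd : forall x : R, is_derive x 1 psi (derive f (X + x *: D) D - (g0 + c * x)).
  by move=> x; rewrite -qd; apply: is_deriveB; exact: phi_derive.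
have cont : {within `[0, 1], continuous psi}.
  apply: continuous_subspaceT => x; apply: differentiable_continuous.
  by apply/derivable1_diffP; case: (Hd x).
have [x0 x0in E] := MVT ltr01 (fun x _ => Hd x) cont.
have x0ge : 0 <= x0 by move: x0in; rewrite in_itv /= => /andP [/ltW].
have sD0 := spec_ge0 D.
have dd : derive f (X + x0 *: D) D - (g0 + c * x0) <= 0.
  rewrite dir_grad // /g0 opprD addrA -raddfB /= -mulmxBl -raddfB /=.
  have h0 := dual (grad f (X + x0 *: D) - grad f X) D nm.
  have h1 := Lip (X + x0 *: D) X.
  rewrite (_ : X + x0 *: D - X = x0 *: D) in h1; last by rewrite addrAC subrr add0r.
  have h2 := spec_scale D nm x0ge.
  have h3 := ler_wpM2r sD0 h1.
  have h4 := ler_wpM2l L0 h2.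
  have h5 := ler_wpM2r sD0 h4.
  rewrite /c; nra.
have : psi 1 - psi 0 <= 0 by rewrite E /= subr0 mulr1.
have ev t : psi t = f (X + t *: D) - q.[t] by [].
rewrite !ev /q !(hornerD, hornerZ, hornerX, hornerXn) scale1r scale0r addr0 expr1n expr0n /= /c.
lra.
Qed.

End Descent.

Unset Implicit Arguments. Set Strict Implicit.

Theorem mainTheorem4 (R : realType) (m n : nat) (f : 'M[R]_(m, n) -> R)
    (L eta : R) (Xt Bt Delta : 'M[R]_(m, n)) :
  (n <= m)%N ->
  (forall X, differentiable f X) ->
  0 < L ->
  (forall X Y, nuc_norm (grad f X - grad f Y) <= L * spec_norm (X - Y)) ->
  0 < eta -> eta * L <= 1 ->
  (forall D : 'M[R]_(m, n),
     \tr (Bt^T *m Delta) + (2 * eta)^-1 * spec_norm Delta ^+ 2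
     <= \tr (Bt^T *m D) + (2 * eta)^-1 * spec_norm D ^+ 2) ->
  (eta / 2 - eta ^+ 2 * L / 2) * nuc_norm (grad f Xt) ^+ 2
  <= 2 * (f Xt - f (Xt + Delta))
     + (2 * eta - eta ^+ 2 * L) * nuc_norm (grad f Xt - Bt) ^+ 2.
Proof.
move=> nm df L0 Lip eta0 etaL opt.
set G := grad f Xt.
set a := nuc_norm G; set b := nuc_norm Bt; set e := nuc_norm (G - Bt).
set d := spec_norm Delta; set T := \tr (Bt^T *m Delta).
have a0 : 0 <= a := nuc_ge0 G nm.
have b0 : 0 <= b := nuc_ge0 Bt nm.
have e0 : 0 <= e := nuc_ge0 (G - Bt) nm.
have d0 : 0 <= d := spec_ge0 Delta.
have F1 := descent Xt Delta nm df (ltW L0) Lip.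
have F2 : \tr (G^T *m Delta) <= T + e * d.
  have -> : \tr (G^T *m Delta) = T + \tr ((G - Bt)^T *m Delta).
    by rewrite /T -mxtraceD -mulmxDl -raddfD /= addrC subrK.
  by rewrite lerD2l; exact: dual.
have F4 : - (b * d) <= T.
  have h := dual Bt (- Delta) nm.
  have h2 := spec_opp Delta nm.
  have h3 : \tr (Bt^T *m - Delta) = - T by rewrite mulmxN raddfN.
  rewrite h3 in h; rewrite lerNl; apply: le_trans h _.
  by rewrite -/b -/d; apply: ler_wpM2l.
have F3 : 2 * eta * T + d ^+ 2 <= - (eta ^+ 2 * b ^+ 2).
  have [W [WE W1]] := nuc_attain Bt nm.
  have eb0 : 0 <= eta * b by apply: mulr_ge0 => //; exact: ltW.
  have h := opt ((eta * b) *: - W).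
  have tE : \tr (Bt^T *m ((eta * b) *: - W)) = - (eta * b * b).
    by rewrite -scalemxAr mxtraceZ mulmxN raddfN /= WE mulrN.
  have sW0 : 0 <= spec_norm ((eta * b) *: - W) := spec_ge0 _.
  have sW : spec_norm ((eta * b) *: - W) <= eta * b.
    apply: le_trans (spec_scale (- W) nm eb0) _.
    rewrite -[X in _ <= X]mulr1; apply: ler_wpM2l => //.
    exact: le_trans (spec_opp W nm) W1.
  rewrite tE in h.
  have sq2 : spec_norm ((eta * b) *: - W) ^+ 2 <= (eta * b) ^+ 2.
    by rewrite ler_pXn2r // nnegrE.
  have ie : 0 < (2 * eta)^-1 by rewrite invr_gt0 mulr_gt0.
  have h' : T + (2 * eta)^-1 * d ^+ 2 <= - (eta * b * b) + (2 * eta)^-1 * (eta * b) ^+ 2.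
    apply: le_trans h _; rewrite lerD2l; apply: ler_wpM2l => //; exact: ltW.
  have en0 : eta != 0 by apply: lt0r_neq0.
  have two : (2:R) != 0 by rewrite pnatr_eq0.
  have E1 : 2 * eta * (T + (2 * eta)^-1 * d ^+ 2) = 2 * eta * T + d ^+ 2.
    by field.
  have E2 : 2 * eta * (- (eta * b * b) + (2 * eta)^-1 * (eta * b) ^+ 2) = - (eta ^+ 2 * b ^+ 2).
    by field.
  have e2 : 0 <= 2 * eta by apply: mulr_ge0 => //; exact: ltW.
  have := ler_wpM2l e2 h'.
  by rewrite E1 E2.
have F5 : a <= b + e := nuc_tri G Bt nm.
rewrite -/G -/d in F1.
have hsq : (d - eta * b) ^+ 2 <= 0.
  have : 2 * eta * (- (b * d)) <= 2 * eta * T.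
    by apply: ler_wpM2l => //; apply: mulr_ge0 => //; exact: ltW.
  move=> h; nra.
have hd : d = eta * b.
  apply/eqP; rewrite -subr_eq0 -sqrf_eq0 eq_le hsq; exact: sqr_ge0.
have HT : T <= - (eta * b ^+ 2).
  rewrite hd in F3; nra.
have HD : 2 * eta * b ^+ 2 - 2 * e * (eta * b) - L * (eta * b) ^+ 2 <= 2 * (f Xt - f (Xt + Delta)).
  rewrite -hd; nra.
set c1 := eta / 2 - eta ^+ 2 * L / 2.
have c10 : 0 <= c1.
  rewrite /c1; have : eta ^+ 2 * L <= eta by rewrite expr2 -mulrA; nra.
  lra.
have A0 : a ^+ 2 <= (b + e) ^+ 2 by rewrite ler_pXn2r // nnegrE; lra.
have A1 : c1 * a ^+ 2 <= c1 * (b + e) ^+ 2 by apply: ler_wpM2l.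
have A2 : c1 * (b + e) ^+ 2 <= 2 * eta * b ^+ 2 - 2 * e * (eta * b) - L * (eta * b) ^+ 2
          + (2 * eta - eta ^+ 2 * L) * e ^+ 2.
  rewrite -subr_ge0.
  have -> : 2 * eta * b ^+ 2 - 2 * e * (eta * b) - L * (eta * b) ^+ 2
          + (2 * eta - eta ^+ 2 * L) * e ^+ 2 - c1 * (b + e) ^+ 2
          = eta * (3 - eta * L) / 2 * (b - e) ^+ 2 by rewrite /c1; field.
  apply: mulr_ge0; last exact: sqr_ge0.
  apply: divr_ge0 => //; apply: mulr_ge0; [exact: ltW | lra].
lra.
Qed.
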